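(* For $\vec S_n(\tau),\bar{\vec S}_n(\tau)\in\mathbb{C}^m$, $v_n(\tau)\in\mathbb{C}$ ($n\in\mathbb{Z}$), write $Q_n:=\langle\vec S_{n+1},\bar{\vec S}_n\rangle+\langle\vec S_n,\bar{\vec S}_{n+1}\rangle$. Consider the spatial linear problem for a scalar $\psi_n$ and vectors $\vec\phi_n,\vec\chi_n\in\mathbb{C}^m$ with constant spectral parameter $\lambda$: \begin{align*} v_n(\psi_{n+1}+\psi_{n-1})&=\lambda\psi_n-\langle\vec S_n,\vec\phi_n\rangle-\langle\vec\chi_n,\bar{\vec S}_n\rangle,\\ \vec\phi_{n+1}-\vec\phi_n&=\tfrac{\mathrm{i}}{2}\bar{\vec S}_n(\psi_{n+1}+\psi_{n-1}),\\ \vec\chi_{n+1}+\vec\chi_n&=\tfrac{\mathrm{i}}{2}\vec S_n(\psi_{n+1}+\psi_{n-1}), \end{align*} together with the time evolution \begin{align*} \psi_{n,\tau}={}&v_nv_{n+1}(\psi_{n+2}+\psi_n)-v_nv_{n-1}(\psi_n+\psi_{n-2})+\tfrac{\mathrm{i}}{2}v_n(Q_n+Q_{n-1})(\psi_{n+1}+\psi_{n-1}),\\ \vec\phi_{n,\tau}={}&\tfrac{\mathrm{i}}{2}v_nv_{n+1}\bar{\vec S}_{n-1}(\psi_{n+2}+\psi_n)+\tfrac{\mathrm{i}}{2}v_nv_{n-1}\bar{\vec S}_{n-2}(\psi_{n+1}+\psi_{n-1})\\ &+\tfrac{\mathrm{i}}{2}v_nv_{n-1}\bar{\vec S}_{n+1}(\psi_n+\psi_{n-2})+\tfrac{\mathrm{i}}{2}v_{n-1}v_{n-2}\bar{\vec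 S}_n(\psi_{n-1}+\psi_{n-3})\\ &-\tfrac14 v_n(Q_n+Q_{n-1})\bar{\vec S}_{n-1}(\psi_{n+1}+\psi_{n-1})+\tfrac14 v_{n-1}(Q_{n-1}+Q_{n-2})\bar{\vec S}_n(\psi_n+\psi_{n-2}),\\ \vec\chi_{n,\tau}={}&\tfrac{\mathrm{i}}{2}v_nv_{n+1}\vec S_{n-1}(\psi_{n+2}+\psi_n)-\tfrac{\mathrm{i}}{2}v_nv_{n-1}\vec S_{n-2}(\psi_{n+1}+\psi_{n-1})\\ &+\tfrac{\mathrm{i}}{2}v_nv_{n-1}\vec S_{n+1}(\psi_n+\psi_{n-2})-\tfrac{\mathrm{i}}{2}v_{n-1}v_{n-2}\vec S_n(\psi_{n-1}+\psi_{n-3})\\ &-\tfrac14 v_n(Q_n+Q_{n-1})\vec S_{n-1}(\psi_{n+1}+\psi_{n-1})-\tfrac14 v_{n-1}(Q_{n-1}+Q_{n-2})\vec S_n(\psi_n+\psi_{n-2}). \end{align*} Then the compatibility condition of these overdetermined linear equations (identically in $\psi_n,\vec\phi_n,\vec\chi_n$, after eliminating $\tau$-derivatives and $\lambda$) is equivalent to the system \begin{align*} \vec S_{n,\tau}={}&v_nv_{n+1}(\vec S_{n+2}+\vec S_n)-v_nv_{n-1}(\vec S_n+\vec S_{n-2})+\tfrac{\mathrm{i}}{2}v_n(Q_n+Q_{n-1})(\vec S_{n+1}+\vec S_{n-1}),\\ \bar{\vec S}_{n,\tau}={}&v_nv_{n+1}(\bar{\vec S}_{n+2}+\bar{\vec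 S}_n)-v_nv_{n-1}(\bar{\vec S}_n+\bar{\vec S}_{n-2})-\tfrac{\mathrm{i}}{2}v_n(Q_n+Q_{n-1})(\bar{\vec S}_{n+1}+\bar{\vec S}_{n-1}),\\ v_{n,\tau}={}&2v_n^2(v_{n+1}-v_{n-1})+\tfrac{\mathrm{i}}{2}v_nv_{n+1}\big(\langle\vec S_{n+2},\bar{\vec S}_n\rangle-\langle\vec S_n,\bar{\vec S}_{n+2}\rangle\big)\\ &-\tfrac{\mathrm{i}}{2}v_nv_{n-1}\big(\langle\vec S_n,\bar{\vec S}_{n-2}\rangle-\langle\vec S_{n-2},\bar{\vec S}_n\rangle\big)-\tfrac14 v_n(Q_n+Q_{n-1})(Q_n-Q_{n-1}). \end{align*}
   Context: $n\in\mathbb{Z}$ is the lattice site, $\tau$ a time variable, subscript $\tau$ denotes $\partial/\partial\tau$. $\langle\vec a,\vec b\rangle=\sum_{i=1}^m a^{(i)}b^{(i)}$ is the standard bilinear scalar product (no complex conjugation). The product of a scalar and a column vector is written in either order. $\bar{\vec S}_n$ is an independent vector variable. *)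

(* Defs.v *)
(* Complex numbers: an arbitrary numClosedFieldType C
   (e.g. algC, or any model of the complex numbers), with imaginary unit 'i. *)
From HB Require Import structures.
From mathcomp Require Import all_boot all_order all_algebra.
Set Implicit Arguments. Unset Strict Implicit. Unset Printing Implicit Defensive.
Import Order.TTheory GRing.Theory Num.Theory.
Local Open Scope ring_scope.

Section Lax.
Variables (C : numClosedFieldType) (m : nat).
Notation vec := 'rV[C]_m.

Definition bdot (a b : vec) : C := \sum_(k < m) a 0 k * b 0 k.

Definition Qf (S Sb : int -> vec) (n : int) : C :=
  bdot (S (n + 1)) (Sb n) + bdot (S n) (Sb (n + 1)).

Definition spatial (lam : C) (v : int -> C) (S Sb : int -> vec)
    (psi : int -> C) (phi chi : int -> vec) : Prop :=
  forall n : int,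
    [/\ v n * (psi (n + 1) + psi (n - 1))
          = lam * psi n - bdot (S n) (phi n) - bdot (chi n) (Sb n),
        phi (n + 1) - phi n = ('i / 2 * (psi (n + 1) + psi (n - 1))) *: Sb n
      & chi (n + 1) + chi n = ('i / 2 * (psi (n + 1) + psi (n - 1))) *: S n].

Definition psi_t (v : int -> C) (S Sb : int -> vec) (psi : int -> C) (n : int) : C :=
  v n * v (n + 1) * (psi (n + 2) + psi n)
  - v n * v (n - 1) * (psi n + psi (n - 2))
  + 'i / 2 * v n * (Qf S Sb n + Qf S Sb (n - 1)) * (psi (n + 1) + psi (n - 1)).

Definition phi_t (v : int -> C) (S Sb : int -> vec) (psi : int -> C) (n : int) : vec :=
  ('i / 2 * v n * v (n + 1) * (psi (n + 2) + psi n)) *: Sb (n - 1)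
  + ('i / 2 * v n * v (n - 1) * (psi (n + 1) + psi (n - 1))) *: Sb (n - 2)
  + ('i / 2 * v n * v (n - 1) * (psi n + psi (n - 2))) *: Sb (n + 1)
  + ('i / 2 * v (n - 1) * v (n - 2) * (psi (n - 1) + psi (n - 3))) *: Sb n
  - (4^-1 * v n * (Qf S Sb n + Qf S Sb (n - 1)) * (psi (n + 1) + psi (n - 1))) *: Sb (n - 1)
  + (4^-1 * v (n - 1) * (Qf S Sb (n - 1) + Qf S Sb (n - 2)) * (psi n + psi (n - 2))) *: Sb n.

Definition chi_t (v : int -> C) (S Sb : int -> vec) (psi : int -> C) (n : int) : vec :=
  ('i / 2 * v n * v (n + 1) * (psi (n + 2) + psi n)) *: S (n - 1)
  - ('i / 2 * v n * v (n - 1) * (psi (n + 1) + psi (n - 1))) *: S (n - 2)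
  + ('i / 2 * v n * v (n - 1) * (psi n + psi (n - 2))) *: S (n + 1)
  - ('i / 2 * v (n - 1) * v (n - 2) * (psi (n - 1) + psi (n - 3))) *: S n
  - (4^-1 * v n * (Qf S Sb n + Qf S Sb (n - 1)) * (psi (n + 1) + psi (n - 1))) *: S (n - 1)
  - (4^-1 * v (n - 1) * (Qf S Sb (n - 1) + Qf S Sb (n - 2)) * (psi n + psi (n - 2))) *: S n.

(* At a fixed time tau, vt, St, Sbt denote the
   tau-derivatives v_{n,tau}, S_{n,tau}, Sbar_{n,tau}.  Differentiating the three
   spatial equations in tau (lam is constant), substituting the time evolution
   psi_t, phi_t, chi_t for the derivatives of psi, phi, chi, the resulting
   expressions must vanish for every lam and every solution (psi, phi, chi) of
   the spatial problem. *)
Definition compatible (v : int -> C) (S Sb : int -> vec)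
    (vt : int -> C) (St Sbt : int -> vec) : Prop :=
  forall (lam : C) (psi : int -> C) (phi chi : int -> vec),
    spatial lam v S Sb psi phi chi ->
    forall n : int,
      [/\ vt n * (psi (n + 1) + psi (n - 1))
            + v n * (psi_t v S Sb psi (n + 1) + psi_t v S Sb psi (n - 1))
          = lam * psi_t v S Sb psi n
            - bdot (St n) (phi n) - bdot (S n) (phi_t v S Sb psi n)
            - bdot (chi_t v S Sb psi n) (Sb n) - bdot (chi n) (Sbt n),
          phi_t v S Sb psi (n + 1) - phi_t v S Sb psi n
          = ('i / 2 * (psi (n + 1) + psi (n - 1))) *: Sbt n
            + ('i / 2 * (psi_t v S Sb psi (n + 1) + psi_t v S Sb psi (n - 1))) *: Sb n
        & chi_t v S Sb psi (n + 1) + chi_t v S Sb psi n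
          = ('i / 2 * (psi (n + 1) + psi (n - 1))) *: St n
            + ('i / 2 * (psi_t v S Sb psi (n + 1) + psi_t v S Sb psi (n - 1))) *: S n].

Definition S_rhs (v : int -> C) (S Sb : int -> vec) (n : int) : vec :=
  (v n * v (n + 1)) *: (S (n + 2) + S n)
  - (v n * v (n - 1)) *: (S n + S (n - 2))
  + ('i / 2 * v n * (Qf S Sb n + Qf S Sb (n - 1))) *: (S (n + 1) + S (n - 1)).

Definition Sb_rhs (v : int -> C) (S Sb : int -> vec) (n : int) : vec :=
  (v n * v (n + 1)) *: (Sb (n + 2) + Sb n)
  - (v n * v (n - 1)) *: (Sb n + Sb (n - 2))
  - ('i / 2 * v n * (Qf S Sb n + Qf S Sb (n - 1))) *: (Sb (n + 1) + Sb (n - 1)).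

Definition v_rhs (v : int -> C) (S Sb : int -> vec) (n : int) : C :=
  2 * v n ^+ 2 * (v (n + 1) - v (n - 1))
  + 'i / 2 * v n * v (n + 1) * (bdot (S (n + 2)) (Sb n) - bdot (S n) (Sb (n + 2)))
  - 'i / 2 * v n * v (n - 1) * (bdot (S n) (Sb (n - 2)) - bdot (S (n - 2)) (Sb n))
  - 4^-1 * v n * (Qf S Sb n + Qf S Sb (n - 1)) * (Qf S Sb n - Qf S Sb (n - 1)).

End Lax.

(* Main.v *)
Require Import Defs.
From HB Require Import structures.
From mathcomp Require Import all_boot all_order all_algebra ring.
Import Order.TTheory GRing.Theory Num.Theory.
Local Open Scope ring_scope.

Section P.
Variables (C : numClosedFieldType) (m : nat).
Implicit Types (n : int).

Lemma i11 n : n + 1 + 1 = n + 2. Proof. ring. Qed.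
Lemma i12 n : n + 1 + 2 = n + 3. Proof. ring. Qed.
Lemma i1m1 n : n + 1 - 1 = n. Proof. ring. Qed.
Lemma i1m2 n : n + 1 - 2 = n - 1. Proof. ring. Qed.
Lemma i1m3 n : n + 1 - 3 = n - 2. Proof. ring. Qed.
Lemma i21 n : n + 2 + 1 = n + 3. Proof. ring. Qed.
Lemma i2m1 n : n + 2 - 1 = n + 1. Proof. ring. Qed.
Lemma im11 n : n - 1 + 1 = n. Proof. ring. Qed.
Lemma im12 n : n - 1 + 2 = n + 1. Proof. ring. Qed.
Lemma im1m1 n : n - 1 - 1 = n - 2. Proof. ring. Qed.
Lemma im1m2 n : n - 1 - 2 = n - 3. Proof. ring. Qed.
Lemma im1m3 n : n - 1 - 3 = n - 4. Proof. ring. Qed.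
Lemma im21 n : n - 2 + 1 = n - 1. Proof. ring. Qed.
Lemma im22 n : n - 2 + 2 = n. Proof. ring. Qed.
Lemma im2m1 n : n - 2 - 1 = n - 3. Proof. ring. Qed.
Lemma im31 n : n - 3 + 1 = n - 2. Proof. ring. Qed.

Ltac inorm := do 3 rewrite ?i11 ?i12 ?i1m1 ?i1m2 ?i1m3 ?i21 ?i2m1 ?im11 ?im12
  ?im1m1 ?im1m2 ?im1m3 ?im21 ?im22 ?im2m1 ?im31.

Lemma hi : ('i : C) * 'i = -1. Proof. by rewrite -expr2 sqrCi. Qed.
Lemma h4 : (4:C)^-1 = 2^-1 * 2^-1. Proof. by rewrite -invfM; congr (_^-1); ring. Qed.

Lemma core2 (v : int -> C) (S Sb : int -> 'rV[C]_m) psi n :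
  phi_t v S Sb psi (n+1) - phi_t v S Sb psi n =
  ('i/2*(psi(n+1)+psi(n-1))) *: Sb_rhs v S Sb n
  + ('i/2 * (psi_t v S Sb psi (n+1) + psi_t v S Sb psi (n-1))) *: Sb n.
Proof.
rewrite /phi_t /psi_t /Sb_rhs; inorm.
apply/rowP => j; rewrite !mxE h4; ring: hi.
Qed.

Lemma core3 (v : int -> C) (S Sb : int -> 'rV[C]_m) psi n :
  chi_t v S Sb psi (n+1) + chi_t v S Sb psi n =
  ('i/2*(psi(n+1)+psi(n-1))) *: S_rhs v S Sb n
  + ('i/2 * (psi_t v S Sb psi (n+1) + psi_t v S Sb psi (n-1))) *: S n.
Proof.
rewrite /chi_t /psi_t /S_rhs; inorm.
apply/rowP => j; rewrite !mxE h4; ring: hi.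
Qed.

Lemma bdotDl (a b c : 'rV[C]_m) : bdot (a + b) c = bdot a c + bdot b c.
Proof. rewrite /bdot -big_split /=; apply: eq_bigr => k _; rewrite !mxE; ring. Qed.
Lemma bdotDr (a b c : 'rV[C]_m) : bdot c (a + b) = bdot c a + bdot c b.
Proof. rewrite /bdot -big_split /=; apply: eq_bigr => k _; rewrite !mxE; ring. Qed.
Lemma bdotNl (a c : 'rV[C]_m) : bdot (- a) c = - bdot a c.
Proof. rewrite /bdot -sumrN; apply: eq_bigr => k _; rewrite !mxE; ring. Qed.
Lemma bdotNr (a c : 'rV[C]_m) : bdot c (- a) = - bdot c a.
Proof. rewrite /bdot -sumrN; apply: eq_bigr => k _; rewrite !mxE; ring. Qed.
Lemma bdotZl x (a c : 'rV[C]_m) : bdot (x *: a) c = x * bdot a c.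
Proof. rewrite /bdot mulr_sumr; apply: eq_bigr => k _; rewrite !mxE; ring. Qed.
Lemma bdotZr x (a c : 'rV[C]_m) : bdot c (x *: a) = x * bdot c a.
Proof. rewrite /bdot mulr_sumr; apply: eq_bigr => k _; rewrite !mxE; ring. Qed.

Lemma solve_lam {l y a b : C} : y = l - a - b -> l = y + a + b.
Proof. by move->; ring. Qed.

Ltac bexp := rewrite ?(bdotDl, bdotDr, bdotNl, bdotNr, bdotZl, bdotZr).

Lemma core1 lam (v : int -> C) (S Sb : int -> 'rV[C]_m) psi phi chi n :
  spatial lam v S Sb psi phi chi ->
  v_rhs v S Sb n * (psi (n + 1) + psi (n - 1))
    + v n * (psi_t v S Sb psi (n + 1) + psi_t v S Sb psi (n - 1))
  = lam * psi_t v S Sb psi n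
    - bdot (S_rhs v S Sb n) (phi n) - bdot (S n) (phi_t v S Sb psi n)
    - bdot (chi_t v S Sb psi n) (Sb n) - bdot (chi n) (Sb_rhs v S Sb n).
Proof.
move=> sp.
have [A0 B0 C0] := sp n.
have [A1 B1 C1] := sp (n+1).
have [A2 B2 C2] := sp (n+2).
have [Am1 Bm1 Cm1] := sp (n-1).
have [Am2 Bm2 Cm2] := sp (n-2).
move: A1 B1 C1 A2 B2 C2 Am1 Bm1 Cm1 Am2 Bm2 Cm2; inorm.
move=> A1 B1 C1 A2 B2 C2 Am1 Bm1 Cm1 Am2 Bm2 Cm2.
have P1 : phi (n+1) = phi n + ('i / 2 * (psi (n + 1) + psi (n - 1))) *: Sb n
  by rewrite -B0 [phi n + _]addrC subrK.
have P2 : phi (n+2) = phi (n+1) + ('i / 2 * (psi (n + 2) + psi n)) *: Sb (n+1)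
  by rewrite -B1 [phi (n+1) + _]addrC subrK.
have Pm1 : phi (n-1) = phi n - ('i / 2 * (psi n + psi (n - 2))) *: Sb (n-1)
  by rewrite -Bm1 subKr.
have Pm2 : phi (n-2) = phi (n-1) - ('i / 2 * (psi (n-1) + psi (n - 3))) *: Sb (n-2)
  by rewrite -Bm2 subKr.
have Q1 : chi (n+1) = - chi n + ('i / 2 * (psi (n + 1) + psi (n - 1))) *: S n
  by rewrite -C0 [- chi n + _]addrC addrK.
have Q2 : chi (n+2) = - chi (n+1) + ('i / 2 * (psi (n + 2) + psi n)) *: S (n+1)
  by rewrite -C1 [- chi (n+1) + _]addrC addrK.
have Qm1 : chi (n-1) = - chi n + ('i / 2 * (psi n + psi (n - 2))) *: S (n-1)
  by rewrite -Cm1 addKr.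
have Qm2 : chi (n-2) = - chi (n-1) + ('i / 2 * (psi (n-1) + psi (n - 3))) *: S (n-2)
  by rewrite -Cm2 addKr.
rewrite Pm1 Qm1 in Pm2 Qm2. rewrite P1 Q1 in P2 Q2.
rewrite P1 Q1 in A1. rewrite P2 Q2 in A2. rewrite Pm1 Qm1 in Am1.
rewrite Pm2 Qm2 in Am2.
move: A0 A1 A2 Am1 Am2; bexp => A0 A1 A2 Am1 Am2.
have L0 := solve_lam A0. have L1 := solve_lam A1. have L2 := solve_lam A2.
have Lm1 := solve_lam Am1. have Lm2 := solve_lam Am2.
have -> : lam * psi_t v S Sb psi n =
  v n * v (n + 1) * (lam * psi (n + 2) + lam * psi n)
  - v n * v (n - 1) * (lam * psi n + lam * psi (n - 2))
  + 'i / 2 * v n * (Qf S Sb n + Qf S Sb (n - 1)) * (lam * psi (n + 1) + lam * psi (n - 1))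
  by rewrite /psi_t; ring.
rewrite L0 L1 L2 Lm1 Lm2.
rewrite /psi_t /phi_t /chi_t /v_rhs /S_rhs /Sb_rhs; inorm.
bexp. rewrite /Qf; inorm. rewrite h4. ring: hi.
Qed.

Lemma vK1 (V : zmodType) (p x : V) : p + x - p = x.
Proof. by rewrite addrC addKr. Qed.
Lemma vK2 (V : zmodType) (c x : V) : - c + x + c = x.
Proof. by rewrite addrAC addNr add0r. Qed.
Lemma vK3 (V : zmodType) (c x : V) : c + (- c + x) = x.
Proof. by rewrite addrA subrr add0r. Qed.
Lemma sK1 (b x : C) : b + (x - b) = x.
Proof. ring. Qed.

Section Sol.
Variables (v : int -> C) (S Sb : int -> 'rV[C]_m) (lam : C) (n0 : int).
Hypothesis hv : forall n, v n != 0.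

Definition st := (C * C * 'rV[C]_m * 'rV[C]_m)%type.

Fixpoint fwd (k : nat) : st :=
  match k with
  | 0 => (0, 1, 0, 0)
  | k'.+1 => let: (a, b, p, c) := fwd k' in
      let j := n0 + k'%:Z in
      let b' := (lam * b - bdot (S j) p - bdot c (Sb j)) / v j - a in
      let w := 'i / 2 * (b' + a) in
      (b, b', p + w *: Sb j, - c + w *: S j)
  end.

Fixpoint bwd (k : nat) : st :=
  match k with
  | 0 => (1, 0, 0, 0)
  | k'.+1 => let: (b, a, p, c) := bwd k' in
      let i := n0 - (k'.+1)%:Z in
      let x := (lam * a - bdot (S i) p + bdot c (Sb i)) / v i in
      let w := 'i / 2 * x in
      (a, x - b, p - w *: Sb i, - c + w *: S i)
  end.

Definition psiF (z : int) : C :=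
  match z - n0 with Posz k => (fwd k).1.1.2 | Negz k => (bwd k.+1).1.1.1 end.
Definition phiF (z : int) : 'rV[C]_m :=
  match z - n0 with Posz k => (fwd k).1.2 | Negz k => (bwd k.+1).1.2 end.
Definition chiF (z : int) : 'rV[C]_m :=
  match z - n0 with Posz k => (fwd k).2 | Negz k => (bwd k.+1).2 end.

Lemma eF (k : nat) : n0 + k%:Z - n0 = k%:Z.
Proof. by rewrite (addrC n0) addrK. Qed.
Lemma eB (k : nat) : n0 - (k.+1)%:Z - n0 = Negz k.
Proof. by rewrite NegzE addrAC subrr add0r. Qed.

Lemma F_psi k : psiF (n0 + k%:Z) = (fwd k).1.1.2.
Proof. by rewrite /psiF eF. Qed.
Lemma F_phi k : phiF (n0 + k%:Z) = (fwd k).1.2.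
Proof. by rewrite /phiF eF. Qed.
Lemma F_chi k : chiF (n0 + k%:Z) = (fwd k).2.
Proof. by rewrite /chiF eF. Qed.
Lemma B_psi k : psiF (n0 - k%:Z) = (bwd k).1.1.1.
Proof.
case: k => [|k]; first by rewrite /psiF subr0 subrr.
by rewrite /psiF eB.
Qed.
Lemma B_phi k : phiF (n0 - k%:Z) = (bwd k).1.2.
Proof.
case: k => [|k]; first by rewrite /phiF subr0 subrr.
by rewrite /phiF eB.
Qed.
Lemma B_chi k : chiF (n0 - k%:Z) = (bwd k).2.
Proof.
case: k => [|k]; first by rewrite /chiF subr0 subrr.
by rewrite /chiF eB.
Qed.

Lemma fwdS_prev k : (fwd k.+1).1.1.1 = (fwd k).1.1.2.
Proof. by rewrite /=; case: (fwd k) => [[[a b] p] c]. Qed.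
Lemma bwdS_prev k : (bwd k.+1).1.1.1 = (bwd k).1.1.2.
Proof. by rewrite /=; case: (bwd k) => [[[a b] p] c]. Qed.

Lemma F_prev k : psiF (n0 + k%:Z - 1) = (fwd k).1.1.1.
Proof.
case: k => [|k].
  by rewrite addr0 (B_psi 1).
rewrite fwdS_prev -F_psi; congr psiF.
by rewrite -addn1 PoszD addrA addrK.
Qed.
Lemma B_prev k : psiF (n0 - k%:Z - 1) = (bwd k).1.1.2.
Proof.
rewrite -bwdS_prev -B_psi; congr psiF.
by rewrite -addn1 PoszD opprD addrA.
Qed.

Lemma sol_spatial : spatial lam v S Sb psiF phiF chiF.
Proof.
move=> z.
have [[k ->]|[k ->]] : (exists k : nat, z = n0 + k%:Z) \/ (exists k : nat, z = n0 - (k.+1)%:Z).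
- case E: (z - n0) => [k|k]; [left|right]; exists k.
    by rewrite -E addrC subrK.
  by rewrite -NegzE -E addrC subrK.
- have e1 : n0 + k%:Z + 1 = n0 + (k.+1)%:Z by rewrite -addn1 PoszD addrA.
  rewrite e1 F_prev !F_psi !F_phi !F_chi /=.
  have hj := hv (n0 + k%:Z).
  case: (fwd k) => [[[a b] p] c] /=.
  split; [by field | exact: vK1 | exact: vK2].
- have e2 : n0 - (k.+1)%:Z + 1 = n0 - k%:Z by rewrite -addn1 PoszD opprD addrA subrK.
  rewrite e2 B_prev !B_psi !B_phi !B_chi /=.
  have hj := hv (n0 - (k.+1)%:Z).
  case: (bwd k) => [[[b a] p] c] /=.
  rewrite sK1; split; [bexp; by field | exact: subKr | exact: vK3].
Qed.
End Sol.

Lemma bdot0l (a : 'rV[C]_m) : bdot 0 a = 0.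
Proof. by rewrite /bdot big1 // => k _; rewrite mxE mul0r. Qed.
Lemma bdot0r (a : 'rV[C]_m) : bdot a 0 = 0.
Proof. by rewrite /bdot big1 // => k _; rewrite mxE mulr0. Qed.

End P.

Theorem proposition2p2 (C : numClosedFieldType) (m : nat)
    (v : int -> C) (S Sb : int -> 'rV[C]_m)
    (vt : int -> C) (St Sbt : int -> 'rV[C]_m) :
  (forall n : int, v n != 0) ->
  (compatible v S Sb vt St Sbt <->
   (forall n : int,
      [/\ St n = S_rhs v S Sb n, Sbt n = Sb_rhs v S Sb n & vt n = v_rhs v S Sb n])).
Proof.
move=> hv; split; last first.
  move=> H lam psi phi chi sp n; have [h1 h2 h3] := H n.
  rewrite h1 h2 h3; split; [exact: core1 | exact: core2 | exact: core3].
move=> comp n.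
have sp := @sol_spatial C m v S Sb (v n) n hv.
have [c1 c2 c3] := comp _ _ _ _ sp n.
have d1 := core1 _ _ _ _ _ _ _ _ _ n sp.
have d2 := core2 _ _ v S Sb (psiF C m v S Sb (v n) n) n.
have d3 := core3 _ _ v S Sb (psiF C m v S Sb (v n) n) n.
have hX : psiF C m v S Sb (v n) n (n + 1) + psiF C m v S Sb (v n) n (n - 1) != 0.
  rewrite (F_psi _ _ v S Sb (v n) n 1) (B_psi _ _ v S Sb (v n) n 1) /=.
  rewrite !bdot0l !bdot0r !subr0 addr0 mulr1 divff //.
  exact: oner_neq0.
set X := psiF C m v S Sb (v n) n (n + 1) + psiF C m v S Sb (v n) n (n - 1) in hX c1 c2 c3 d1 d2 d3.
have hi2 : 'i / 2 * X != 0.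
  rewrite mulf_neq0 // mulf_neq0 ?neq0Ci // invr_eq0 pnatr_eq0 //.
rewrite c2 in d2. rewrite c3 in d3.
move/addIr/(scalerI hi2): d2 => e2.
move/addIr/(scalerI hi2): d3 => e3.
rewrite e2 e3 -d1 in c1.
move/addIr/(mulIf hX): c1 => e1.
by split.
Qed.
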